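(* Let $U=\{(x_1,x_2,p_1,p_2)\in\mathbb R^2\times(\mathbb R^2\setminus\{0\}) : x_1p_1+x_2p_2\neq 0\}$, and on $U$ define $\bar D=x_1p_1+x_2p_2$, $\bar J^0=x_1p_2-x_2p_1$, $\bar J^1=-x_2\sqrt{p_1^2+p_2^2}$, $\bar J^2=x_1\sqrt{p_1^2+p_2^2}$. For real constants $a,b,c$ let $$\bar H_{a,b,c}=\operatorname{sign}(\bar D)\,\big(\bar D+a\bar J^0+b\bar J^1+c\bar J^2\big).$$ Then $\bar H_{a,b,c}$ is bounded from below on $U$ if and only if $a=b=c=0$; in that case $\bar H_{0,0,0}=|\bar D|\ge 0$.
   Context: Here $(x_1,x_2,p_1,p_2)$ are coordinates on the physical phase space of the (group-completed) metric-torus sector of 2+1 gravity, and the functions $\bar D$, $\bar J^\mu$ are the projections of the dilatation and Lorentz generators; the functions $\bar H_{a,b,c}$ are the candidate Hamiltonians generating future-directed time evolution along the constant-mean-curvature surfaces. The set $U$ corresponds to the (non-static) physical phase space, on which $\bar D\neq 0$. *)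

(* Defs.v *)
From Stdlib Require Import Reals.
Open Scope R_scope.

Definition sign (r : R) : R :=
  if Rlt_dec 0 r then 1 else if Rlt_dec r 0 then -1 else 0.

Definition Dbar (x1 x2 p1 p2 : R) : R := x1 * p1 + x2 * p2.
Definition J0bar (x1 x2 p1 p2 : R) : R := x1 * p2 - x2 * p1.
Definition J1bar (x1 x2 p1 p2 : R) : R := - x2 * sqrt (p1 ^ 2 + p2 ^ 2).
Definition J2bar (x1 x2 p1 p2 : R) : R := x1 * sqrt (p1 ^ 2 + p2 ^ 2).

Definition inU (x1 x2 p1 p2 : R) : Prop :=
  (p1 <> 0 \/ p2 <> 0) /\ Dbar x1 x2 p1 p2 <> 0.

Definition Hbar (a b c x1 x2 p1 p2 : R) : R :=
  sign (Dbar x1 x2 p1 p2) *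
  (Dbar x1 x2 p1 p2 + a * J0bar x1 x2 p1 p2 + b * J1bar x1 x2 p1 p2
   + c * J2bar x1 x2 p1 p2).

(* Main.v *)
Require Import Defs.
From Stdlib Require Import Reals Lra.
Open Scope R_scope.

Lemma lin_bdd (m al be : R) : (forall t, m <= al + be * t) -> be = 0.
Proof.
  intros H. destruct (Req_dec be 0) as [|Hb]; auto.
  specialize (H ((m - al - 1) / be)).
  replace (al + be * ((m - al - 1) / be)) with (m - 1) in H by (field; auto).
  lra.
Qed.

Lemma sign_pos r : 0 < r -> sign r = 1.
Proof. intros; unfold sign; destruct (Rlt_dec 0 r); lra. Qed.

Lemma sq1 (u v : R) : u ^ 2 + v ^ 2 = 1 -> sqrt (u ^ 2 + v ^ 2) = 1.
Proof. intros ->; apply sqrt_1. Qed.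

Lemma Hform a b c x1 x2 p1 p2 :
  p1 ^ 2 + p2 ^ 2 = 1 -> 0 < Dbar x1 x2 p1 p2 ->
  Hbar a b c x1 x2 p1 p2 =
  x1 * (p1 + a * p2 + c) + x2 * (p2 - a * p1 - b).
Proof.
  intros Hp HD. unfold Hbar. rewrite (sign_pos _ HD).
  unfold Dbar, J0bar, J1bar, J2bar. rewrite (sq1 _ _ Hp). ring.
Qed.

Theorem mainTheorem2 (a b c : R) :
  ((exists m : R, forall x1 x2 p1 p2 : R,
       inU x1 x2 p1 p2 -> m <= Hbar a b c x1 x2 p1 p2)
   <-> (a = 0 /\ b = 0 /\ c = 0))
  /\ (forall x1 x2 p1 p2 : R, inU x1 x2 p1 p2 ->
        Hbar 0 0 0 x1 x2 p1 p2 = Rabs (Dbar x1 x2 p1 p2)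
        /\ 0 <= Hbar 0 0 0 x1 x2 p1 p2).
Proof.
  assert (H0 : forall x1 x2 p1 p2 : R,
        Hbar 0 0 0 x1 x2 p1 p2 = Rabs (Dbar x1 x2 p1 p2)
        /\ 0 <= Hbar 0 0 0 x1 x2 p1 p2).
  { intros x1 x2 p1 p2.
    assert (E : Hbar 0 0 0 x1 x2 p1 p2 = Rabs (Dbar x1 x2 p1 p2)).
    { unfold Hbar. set (D := Dbar x1 x2 p1 p2).
      unfold sign. destruct (Rlt_dec 0 D).
      - rewrite Rabs_right by lra. ring.
      - destruct (Rlt_dec D 0).
        + rewrite Rabs_left by lra. ring.
        + assert (D = 0) by lra. rewrite H, Rabs_R0. ring. }
    split; auto. rewrite E. apply Rabs_pos. }
  split; [| intros; apply H0].
  split.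
  - intros [m Hm].
    assert (Hpt : forall x1 x2 p1 p2, p1 ^ 2 + p2 ^ 2 = 1 ->
               0 < Dbar x1 x2 p1 p2 ->
               m <= x1 * (p1 + a * p2 + c) + x2 * (p2 - a * p1 - b)).
    { intros x1 x2 p1 p2 Hp HD. rewrite <- Hform by auto. apply Hm.
      split; [| lra]. destruct (Req_dec p1 0); [right|left]; auto.
      intro; subst; lra. }
    assert (E1 : - a - b = 0).
    { apply (lin_bdd m (1 + c)). intro t.
      specialize (Hpt 1 t 1 0). unfold Dbar in Hpt.
      replace (1 + c + (- a - b) * t) with (1 * (1 + a * 0 + c) + t * (0 - a * 1 - b)) by ring.
      apply Hpt; lra. }
    assert (E2 : a - b = 0).
    { apply (lin_bdd m (1 - c)). intro t.
      specialize (Hpt (-1) t (-1) 0). unfold Dbar in Hpt.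
      replace (1 - c + (a - b) * t) with (-1 * (-1 + a * 0 + c) + t * (0 - a * -1 - b)) by ring.
      apply Hpt; lra. }
    assert (E3 : a + c = 0).
    { apply (lin_bdd m (1 - b)). intro t.
      specialize (Hpt t 1 0 1). unfold Dbar in Hpt.
      replace (1 - b + (a + c) * t) with (t * (0 + a * 1 + c) + 1 * (1 - a * 0 - b)) by ring.
      apply Hpt; lra. }
    assert (E4 : c - a = 0).
    { apply (lin_bdd m (1 + b)). intro t.
      specialize (Hpt t (-1) 0 (-1)). unfold Dbar in Hpt.
      replace (1 + b + (c - a) * t) with (t * (0 + a * -1 + c) + -1 * (-1 - a * 0 - b)) by ring.
      apply Hpt; lra. }
    lra.
  - intros [-> [-> ->]]. exists 0. intros. apply H0.
Qed.
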